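(* For $n\ge1$ let $\widehat x^n(t):=\sum_{m=0}^{n-1}\sum_{k=0}^{2^m-1}e_{m,k}(t)$, $t\in[0,1]$, let $J_n:=\frac13(2^n-(-1)^n)$ (the Jacobsthal numbers), and let $$M_n:=\frac13\Big(2+\sqrt2+(-1)^{n+1}2^{-n}(\sqrt2-1)\Big)-2^{-n/2}.$$ Then $\widehat x^n$ has exactly two maximal points on $[0,1]$, namely $t_n^-:=2^{-n}J_n\in[0,1/2]$ and $t_n^+:=1-t_n^-\in[1/2,1]$, and $$\max_{t\in[0,1]}\widehat x^n(t)=\widehat x^n(t_n^-)=\widehat x^n(t_n^+)=M_n.$$
   Context: The Faber--Schauder functions are $e_{0,0}(t):=(\min\{t,1-t\})^+$ and $e_{m,k}(t):=2^{-m/2}e_{0,0}(2^m t-k)$ for $t\in\mathbb R$, $m\ge1$, $k\in\mathbb Z$. *)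

(* Defs.v *)
From Stdlib Require Import Reals Lra Lia List.
Open Scope R_scope.

Definition fsum (f : nat -> R) (N : nat) : R :=
  fold_right Rplus 0 (map f (seq 0 N)).

Definition e00 (t : R) : R := Rmax (Rmin t (1 - t)) 0.

Definition emk (m k : nat) (t : R) : R :=
  Rpower 2 (- INR m / 2) * e00 (2 ^ m * t - INR k).

Definition xhat (n : nat) (t : R) : R :=
  fsum (fun m => fsum (fun k => emk m k t) (2 ^ m)%nat) n.

Definition Jac (n : nat) : R := (2 ^ n - (-1) ^ n) / 3.

Definition tminus (n : nat) : R := / 2 ^ n * Jac n.
Definition tplus (n : nat) : R := 1 - tminus n.

Definition Mn (n : nat) : R :=
  (2 + sqrt 2 + (-1) ^ (n + 1) * / 2 ^ n * (sqrt 2 - 1)) / 3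
  - Rpower 2 (- INR n / 2).

(* Main.v *)
Require Import Defs.
From Stdlib Require Import Reals Lra Lia List.
Open Scope R_scope.

Lemma seq_shift' : forall len start, map S (seq start len) = seq (S start) len.
Proof. induction len; intros; simpl; [reflexivity| now rewrite IHlen]. Qed.

Lemma fsum_S_l f N : fsum f (S N) = f 0%nat + fsum (fun i => f (S i)) N.
Proof.
  unfold fsum. simpl. f_equal. rewrite <- seq_shift', map_map. reflexivity.
Qed.

Lemma fsum_0 f : fsum f 0 = 0.
Proof. reflexivity. Qed.

Lemma fsum_add f a b : fsum f (a + b) = fsum f a + fsum (fun i => f (a + i)%nat) b.
Proof.
  revert f; induction a; intros f.
  - cbn [plus]. rewrite fsum_0, Rplus_0_l. reflexivity.
  - cbn [plus]. rewrite !fsum_S_l, IHa. ring.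
Qed.

Lemma fsum_ext f g N : (forall i, (i < N)%nat -> f i = g i) -> fsum f N = fsum g N.
Proof.
  revert f g; induction N; intros f g H; [reflexivity|].
  rewrite !fsum_S_l. rewrite H by lia. f_equal. apply IHN. intros; apply H; lia.
Qed.

Lemma fsum_scal c f N : fsum (fun i => c * f i) N = c * fsum f N.
Proof.
  revert f; induction N; intros f; [unfold fsum; simpl; ring|].
  rewrite !fsum_S_l, IHN. ring.
Qed.

Lemma fsum_zero f N : (forall i, (i < N)%nat -> f i = 0) -> fsum f N = 0.
Proof.
  intros H. rewrite (fsum_ext f (fun i => 0 * 0)) by (intros; rewrite H; [ring|lia]).
  rewrite fsum_scal. ring.
Qed.

Lemma e00_le0 x : x <= 0 -> e00 x = 0.
Proof. intros; unfold e00, Rmax, Rmin; repeat destruct Rle_dec; lra. Qed.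
Lemma e00_ge1 x : 1 <= x -> e00 x = 0.
Proof. intros; unfold e00, Rmax, Rmin; repeat destruct Rle_dec; lra. Qed.
Lemma e00_lo x : 0 <= x <= 1/2 -> e00 x = x.
Proof. intros; unfold e00, Rmax, Rmin; repeat destruct Rle_dec; lra. Qed.
Lemma e00_hi x : 1/2 <= x <= 1 -> e00 x = 1 - x.
Proof. intros; unfold e00, Rmax, Rmin; repeat destruct Rle_dec; lra. Qed.

Definition w := Rpower 2 (- (1) / 2).

Lemma Rpow_S m : Rpower 2 (- INR (S m) / 2) = w * Rpower 2 (- INR m / 2).
Proof.
  unfold w. rewrite <- Rpower_plus. f_equal. rewrite S_INR. field.
Qed.

Lemma INR_pow2 m : INR (2 ^ m) = 2 ^ m.
Proof. rewrite pow_INR. simpl INR. f_equal; ring. Qed.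

Lemma pow2_pos m : 0 < 2 ^ m.
Proof. apply pow_lt; lra. Qed.

Lemma pow2_S m : (2 ^ S m = 2 ^ m + 2 ^ m)%nat.
Proof. simpl. lia. Qed.

Lemma xhat_0 t : xhat 0 t = 0.
Proof. reflexivity. Qed.

Lemma xhat_first n t : xhat (S n) t =
   e00 t + fsum (fun m => fsum (fun k => emk (S m) k t) (2 ^ S m)%nat) n.
Proof.
  unfold xhat. rewrite fsum_S_l. f_equal.
  simpl (2 ^ 0)%nat. rewrite fsum_S_l, fsum_0. unfold emk. simpl INR.
  replace (- 0 / 2) with 0 by field. rewrite Rpower_O by lra.
  replace (2 ^ 0 * t - 0) with t by (simpl; ring). ring.
Qed.

Lemma xhat_lo n t : 0 <= t <= 1/2 -> xhat (S n) t = t + w * xhat n (2 * t).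
Proof.
  intros Ht. rewrite xhat_first, e00_lo by lra. f_equal.
  unfold xhat. rewrite <- fsum_scal. apply fsum_ext. intros m _.
  rewrite pow2_S, fsum_add.
  rewrite (fsum_zero (fun i => emk (S m) (2 ^ m + i) t)).
  2:{ intros i _. unfold emk. rewrite e00_le0. ring.
      rewrite plus_INR, INR_pow2. simpl pow.
      pose proof (pos_INR i). pose proof (pow2_pos m). nra. }
  rewrite Rplus_0_r, <- fsum_scal. apply fsum_ext. intros k _.
  unfold emk. rewrite Rpow_S. simpl pow. rewrite Rmult_assoc. f_equal. f_equal. f_equal. ring.
Qed.

Lemma xhat_hi n t : 1/2 <= t <= 1 -> xhat (S n) t = (1 - t) + w * xhat n (2 * t - 1).
Proof.
  intros Ht. rewrite xhat_first, e00_hi by lra. f_equal.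
  unfold xhat. rewrite <- fsum_scal. apply fsum_ext. intros m _.
  rewrite pow2_S, fsum_add.
  rewrite (fsum_zero (fun i => emk (S m) i t)).
  2:{ intros i Hi. unfold emk. rewrite e00_ge1. ring.
      assert (INR i + 1 <= INR (2 ^ m)) by (rewrite <- S_INR; apply le_INR; lia).
      rewrite INR_pow2 in H. simpl pow.
      pose proof (pos_INR i). pose proof (pow2_pos m). nra. }
  rewrite Rplus_0_l, <- fsum_scal. apply fsum_ext. intros k _.
  unfold emk. rewrite Rpow_S. simpl pow. rewrite Rmult_assoc. f_equal. f_equal. f_equal.
  rewrite plus_INR, INR_pow2. ring.
Qed.

Lemma xhat_sym n t : 0 <= t <= 1 -> xhat n (1 - t) = xhat n t.
Proof.
  revert t; induction n; intros t Ht; [reflexivity|].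
  destruct (Rle_dec t (1/2)).
  - rewrite (xhat_hi n (1 - t)), (xhat_lo n t) by lra.
    replace (2 * (1 - t) - 1) with (1 - 2 * t) by ring. rewrite IHn by lra. f_equal; ring.
  - rewrite (xhat_hi n t), (xhat_lo n (1 - t)) by lra.
    replace (2 * (1 - t)) with (1 - (2 * t - 1)) by ring. rewrite IHn by lra. f_equal.
Qed.

Lemma r2 : sqrt 2 * sqrt 2 = 2.
Proof. apply sqrt_sqrt; lra. Qed.
Lemma r_bounds : 1.4 < sqrt 2 < 1.5.
Proof.
  pose proof r2. pose proof (sqrt_pos 2). split; nra.
Qed.
Lemma w_r : w = sqrt 2 / 2.
Proof.
  unfold w. replace (- (1) / 2) with (- / 2) by field.
  rewrite Rpower_Ropp, Rpower_sqrt by lra.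
  pose proof r2. pose proof r_bounds. replace (sqrt 2 / 2) with (sqrt 2 / (sqrt 2 * sqrt 2)) by (rewrite H; reflexivity). field. lra.
Qed.
Lemma ww : forall X, w * (w * X) = X / 2.
Proof. intros. rewrite w_r. pose proof r2. transitivity (sqrt 2 * sqrt 2 * X / 4); [field|]. rewrite r2. field. Qed.

Definition E n := (-1) ^ n / 2 ^ n.
Definition RR n := Rpower 2 (- INR n / 2).

Lemma tm_E n : tminus n = (1 - E n) / 3.
Proof. unfold tminus, Jac, E. pose proof (pow2_pos n). field. lra. Qed.

Lemma Mn_E n : Mn n = (2 + sqrt 2 - E n * (sqrt 2 - 1)) / 3 - RR n.
Proof.
  unfold Mn, E, RR. rewrite pow_add. pose proof (pow2_pos n). simpl pow. field. lra.
Qed.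

Lemma E_S n : E (S n) = - E n / 2.
Proof. unfold E. simpl pow. pose proof (pow2_pos n). field. lra. Qed.

Lemma RR_SS n : RR (S (S n)) = RR n / 2.
Proof.
  unfold RR. rewrite !S_INR. replace (- (INR n + 1 + 1) / 2) with (- INR n / 2 + - (1)) by field.
  rewrite Rpower_plus, Rpower_Ropp, Rpower_1 by lra. field.
Qed.

Lemma E_abs n : Rabs (E n) <= 1.
Proof.
  induction n. unfold E; simpl. replace (1 / 1) with 1 by field. rewrite Rabs_R1. lra.
  rewrite E_S. unfold Rabs in *. repeat destruct Rcase_abs; lra.
Qed.

Lemma tm_SS n : tminus (S (S n)) = (tminus n + 1) / 4.
Proof. rewrite !tm_E, !E_S. field. Qed.

Lemma Mn_SS n : Mn (S (S n)) = w + (1 - sqrt 2) * tminus (S (S n)) + Mn n / 2.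
Proof. rewrite !Mn_E, tm_E, !E_S, RR_SS, w_r. field. Qed.

Lemma tm_range n : (1 <= n)%nat -> 0 <= tminus n <= 1/2.
Proof.
  intros H. destruct n; [lia|]. rewrite tm_E, E_S. pose proof (E_abs n).
  unfold Rabs in *. destruct Rcase_abs; lra.
Qed.

Definition Q n := xhat n (tminus n) = Mn n /\
  forall s, 0 <= s <= 1/2 -> xhat n s <= Mn n - (sqrt 2 - 1) * Rabs (s - tminus n).

Lemma Q_hi n : Q n -> 0 <= tminus n <= 1/2 -> forall s, 1/2 <= s <= 1 ->
  xhat n s <= Mn n - (sqrt 2 - 1) * Rabs (1 - s - tminus n).
Proof.
  intros [_ HQ] Hp s Hs. rewrite <- (xhat_sym n s) by lra. apply HQ; lra.
Qed.

Lemma Q_step n : Q n -> 0 <= tminus n <= 1/2 -> Q (S (S n)).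
Proof.
  intros HQ Hp. pose proof (Q_hi n HQ Hp) as HH. destruct HQ as [HE HQ].
  pose proof r_bounds as Hr.
  unfold Q. rewrite Mn_SS, tm_SS. set (p := tminus n) in *. set (M := Mn n) in *. split.
  - rewrite xhat_lo by lra. rewrite (xhat_hi n) by lra.
    replace (2 * (2 * ((p + 1) / 4)) - 1) with p by field.
    rewrite HE, Rmult_plus_distr_l, ww, w_r. field.
  - intros t Ht. rewrite xhat_lo by lra. destruct (Rle_dec t (1/4)).
    + rewrite (xhat_lo n) by lra. rewrite Rmult_plus_distr_l, ww.
      set (s := 2 * (2 * t)). assert (Hs : 0 <= s <= 1) by (unfold s; lra).
      assert (F1 : xhat n s <= M + 1 - (sqrt 2 - 1) * p - s).
      { destruct (Rle_dec s (1/2)).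
        - pose proof (HQ s ltac:(unfold s in *; lra)).
          assert (A: p - s <= Rabs (s - p)) by (unfold Rabs; destruct Rcase_abs; lra).
          assert (B: (sqrt 2 - 1) * (p - s) <= (sqrt 2 - 1) * Rabs (s-p)) by (apply Rmult_le_compat_l; lra).
          assert (C: sqrt 2 * s <= 1) by nra.
          lra.
        - pose proof (HH s ltac:(unfold s in *; lra)).
          assert (A: p - (1 - s) <= Rabs (1 - s - p)) by (unfold Rabs; destruct Rcase_abs; lra).
          assert (B: (sqrt 2 - 1) * (p - (1 - s)) <= (sqrt 2 - 1) * Rabs (1 - s-p)) by (apply Rmult_le_compat_l; lra).
          assert (C: sqrt 2 * (1 - s) <= 2 * (1 - s)) by nra.
          lra. }
      rewrite w_r. rewrite Rabs_left1 by lra. unfold s in *. lra.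
    + rewrite (xhat_hi n) by lra. rewrite Rmult_plus_distr_l, ww.
      set (s := 2 * (2 * t) - 1). assert (Hs : 0 <= s <= 1) by (unfold s; lra).
      assert (F2 : xhat n s <= M - (sqrt 2 - 1) * (p - s)).
      { destruct (Rle_dec s (1/2)).
        - pose proof (HQ s ltac:(unfold s in *; lra)).
          assert (A: p - s <= Rabs (s - p)) by (unfold Rabs; destruct Rcase_abs; lra).
          assert (B: (sqrt 2 - 1) * (p - s) <= (sqrt 2 - 1) * Rabs (s-p)) by (apply Rmult_le_compat_l; lra).
          lra.
        - pose proof (HH s ltac:(unfold s in *; lra)).
          assert (A: p - s <= Rabs (1 - s - p)) by (unfold Rabs; destruct Rcase_abs; lra).
          assert (B: (sqrt 2 - 1) * (p - s) <= (sqrt 2 - 1) * Rabs (1 - s-p)) by (apply Rmult_le_compat_l; lra).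
          lra. }
      rewrite w_r. destruct (Rle_dec t ((p + 1) / 4)).
      * rewrite Rabs_left1 by lra. unfold s in *. lra.
      * rewrite Rabs_right by lra.
        assert (F3 : xhat n s <= M).
        { destruct (Rle_dec s (1/2)).
          - pose proof (HQ s ltac:(unfold s in *; lra)).
            assert (0 <= (sqrt 2 - 1) * Rabs (s-p)) by (apply Rmult_le_pos; [lra|apply Rabs_pos]). lra.
          - pose proof (HH s ltac:(unfold s in *; lra)).
            assert (0 <= (sqrt 2 - 1) * Rabs (1-s-p)) by (apply Rmult_le_pos; [lra|apply Rabs_pos]). lra. }
        unfold s in *. lra.
Qed.

Lemma E0 : E 0 = 1.
Proof. unfold E; simpl; field. Qed.
Lemma RR0 : RR 0 = 1.
Proof. unfold RR. simpl INR. replace (- 0 / 2) with 0 by field. apply Rpower_O; lra. Qed.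
Lemma RR1 : RR 1 = w.
Proof. unfold RR, w. simpl INR. reflexivity. Qed.

Lemma Q1 : Q 1.
Proof.
  assert (Ht : tminus 1 = 1/2) by (rewrite tm_E, E_S, E0; field).
  assert (HM : Mn 1 = 1/2) by (rewrite Mn_E, E_S, E0, RR1, w_r; field).
  pose proof r_bounds. unfold Q. rewrite Ht, HM. split.
  - rewrite xhat_lo by lra. rewrite xhat_0. ring.
  - intros s Hs. rewrite xhat_lo by lra. rewrite xhat_0.
    rewrite Rabs_left1 by lra. nra.
Qed.

Lemma Q2 : Q 2.
Proof.
  assert (Ht : tminus 2 = 1/4) by (rewrite tm_E, !E_S, E0; field).
  assert (HM : Mn 2 = 1/4 + sqrt 2 / 4) by (rewrite Mn_E, !E_S, E0, RR_SS, RR0; field).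
  pose proof r_bounds. unfold Q. rewrite Ht, HM. split.
  - rewrite xhat_lo by lra. rewrite (xhat_hi 0) by lra. rewrite xhat_0, w_r. field.
  - intros s Hs. rewrite xhat_lo by lra. destruct (Rle_dec s (1/4)).
    + rewrite (xhat_lo 0) by lra. rewrite xhat_0, w_r.
      rewrite Rabs_left1 by lra. nra.
    + rewrite (xhat_hi 0) by lra. rewrite xhat_0, w_r.
      rewrite Rabs_right by lra. nra.
Qed.

Lemma Q_all n : (1 <= n)%nat -> Q n.
Proof.
  assert (forall m, Q (S m) /\ Q (S (S m))).
  { induction m. split; [exact Q1|exact Q2].
    destruct IHm as [A B]. split; [exact B|]. apply Q_step; [exact A|]. apply tm_range. lia. }
  intros H1. destruct n; [lia|]. apply H.
Qed.

Theorem lemma3p1 (n : nat) (hn : (1 <= n)%nat) :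
  (0 <= tminus n <= 1 / 2) /\ (1 / 2 <= tplus n <= 1) /\
  xhat n (tminus n) = Mn n /\ xhat n (tplus n) = Mn n /\
  (forall t, 0 <= t <= 1 -> xhat n t <= Mn n) /\
  (forall t, 0 <= t <= 1 -> xhat n t = Mn n -> t = tminus n \/ t = tplus n) /\
  ((2 <= n)%nat -> tminus n <> tplus n).
Proof.
  pose proof (tm_range n hn) as Hp. pose proof (Q_all n hn) as HQ.
  pose proof (Q_hi n HQ Hp) as HH. destruct HQ as [HE HQ].
  pose proof r_bounds as Hr. unfold tplus.
  split; [exact Hp|]. split; [lra|]. split; [exact HE|].
  split; [rewrite xhat_sym by lra; exact HE|].
  split; [|split].
  - intros t Ht. destruct (Rle_dec t (1/2)).
    + pose proof (HQ t ltac:(lra)).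
      assert (0 <= (sqrt 2 - 1) * Rabs (t - tminus n)) by (apply Rmult_le_pos; [lra|apply Rabs_pos]). lra.
    + pose proof (HH t ltac:(lra)).
      assert (0 <= (sqrt 2 - 1) * Rabs (1 - t - tminus n)) by (apply Rmult_le_pos; [lra|apply Rabs_pos]). lra.
  - intros t Ht Heq. destruct (Rle_dec t (1/2)).
    + pose proof (HQ t ltac:(lra)). left.
      assert ((sqrt 2 - 1) * Rabs (t - tminus n) <= 0) by lra.
      assert (Rabs (t - tminus n) <= 0).
      { apply (Rmult_le_reg_l (sqrt 2 - 1)); lra. }
      pose proof (Rabs_pos (t - tminus n)).
      unfold Rabs in *. destruct Rcase_abs; lra.
    + pose proof (HH t ltac:(lra)). right.
      assert ((sqrt 2 - 1) * Rabs (1 - t - tminus n) <= 0) by lra.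
      assert (Rabs (1 - t - tminus n) <= 0).
      { apply (Rmult_le_reg_l (sqrt 2 - 1)); lra. }
      pose proof (Rabs_pos (1 - t - tminus n)).
      unfold Rabs in *. destruct Rcase_abs; lra.
  - intros H2. destruct n as [|[|m]]; [lia|lia|].
    rewrite tm_E, !E_S. pose proof (E_abs m). unfold Rabs in *. destruct Rcase_abs; lra.
Qed.
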